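(* Suppose $\max_{0\le j\le p}|f_j(\bm X)|\le C_0$ a.s. and $|S_{\bar\gamma}|\lambda_0\le\zeta_0$. Suppose the event $$D^\dagger_{\rm CAL}(\hat\gamma^\top\bm F,\bar\gamma^\top\bm F)+(A_0-1)\lambda_0\|\hat\gamma-\bar\gamma\|_1\le M_0|S_{\bar\gamma}|\lambda_0^2$$ holds for constants $A_0>1$ and $M_0>0$. Then $$\tilde{\mathbb E}[Rw(\bm X;\bar\gamma)\{(\hat\gamma-\bar\gamma)^\top\bm F\}^2]\le\exp(\eta_{01})M_0|S_{\bar\gamma}|\lambda_0^2,\qquad\eta_{01}=(A_0-1)^{-1}M_0C_0\zeta_0.$$
   Context: $\tilde{\mathbb E}$ denotes the sample mean over i.i.d. observations $(\bm X_i,R_i)$, $i=1,\dots,N$, with $R_i\in\{0,1\}$. $\bm F=(f_0(\bm X),\dots,f_p(\bm X))^\top$, and $w(\bm X;\gamma)=\exp(-\gamma^\top\bm F)$. $\hat\gamma,\bar\gamma\in\mathbb R^{p+1}$ are arbitrary vectors. $S_{\bar\gamma}=\{0\}\cup\{j\ge1:\bar\gamma_j\neq0\}$, and $\lambda_0>0$, $\zeta_0>0$. $D^\dagger_{\rm CAL}(\hat\gamma^\top\bm F,\bar\gamma^\top\bm F)=-\tilde{\mathbb E}[R\{\exp(-\hat\gamma^\top\bm F)-\exp(-\bar\gamma^\top\bm F)\}(\hat\gamma-\bar\gamma)^\top\bm F]$, which is nonnegative. *)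

(* Defs.v *)
From mathcomp Require Import all_boot all_order all_algebra.
From mathcomp Require Import reals.
From mathcomp Require Import sequences exp.
Set Implicit Arguments. Unset Strict Implicit. Unset Printing Implicit Defensive.
Import Order.TTheory GRing.Theory Num.Theory.
Local Open Scope ring_scope.

(* Observations i : 'I_N; basis values Fv i j = f_j(X_i), j : 'I_p.+1;
   Rv i = R_i in {0,1} (as bool); coefficient vectors g : 'I_p.+1 -> R. *)

Definition Emean {R : realType} (N : nat) (h : 'I_N -> R) : R :=
  N%:R^-1 * \sum_(i < N) h i.

Definition linF {R : realType} (N p : nat) (Fv : 'I_N -> 'I_p.+1 -> R)
  (g : 'I_p.+1 -> R) (i : 'I_N) : R := \sum_(j < p.+1) g j * Fv i j.

Definition wfun {R : realType} (N p : nat) (Fv : 'I_N -> 'I_p.+1 -> R)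
  (g : 'I_p.+1 -> R) (i : 'I_N) : R := expR (- linF Fv g i).

Definition Rind {R : realType} (N : nat) (Rv : 'I_N -> bool) (i : 'I_N) : R :=
  (Rv i)%:R.

Definition DCAL {R : realType} (N p : nat) (Fv : 'I_N -> 'I_p.+1 -> R)
  (Rv : 'I_N -> bool) (ghat gbar : 'I_p.+1 -> R) : R :=
  - Emean (fun i => Rind Rv i * (wfun Fv ghat i - wfun Fv gbar i)
                    * (linF Fv ghat i - linF Fv gbar i)).

Definition l1norm {R : realType} (p : nat) (g : 'I_p.+1 -> R) : R :=
  \sum_(j < p.+1) `|g j|.

Definition supp0 {R : realType} (p : nat) (g : 'I_p.+1 -> R) : {set 'I_p.+1} :=
  [set j : 'I_p.+1 | (j == ord0) || (g j != 0)].

(* Main.v *)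
Require Import Defs.
From mathcomp Require Import all_boot all_order all_algebra.
From mathcomp Require Import reals.
From mathcomp Require Import sequences exp.
From mathcomp Require Import ring lra.
Import Order.TTheory GRing.Theory Num.Theory.
Local Open Scope ring_scope.

Lemma key_ineq {R : realType} (d : R) :
  expR (- `|d|) * d ^+ 2 <= (1 - expR (- d)) * d.
Proof.
have h1 := expR_ge1Dx d. have h2 := expR_ge1Dx (- d).
have h3 := expRxMexpNx_1 d. have h4 := expR_gt0 d. have h5 := expR_gt0 (- d).
case: (lerP 0 d) => hd.
- rewrite ger0_norm //.
  have := ler_wpM2l (ltW h5) h1.
  nra.
- rewrite ltr0_norm // opprK.
  have : expR d <= 1 by rewrite expR_le1 ltW.
  nra.
Qed.

Lemma Emean_le {R : realType} N (f g : 'I_N -> R) :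
  (forall i, f i <= g i) -> Emean f <= Emean g.
Proof.
move=> h; rewrite /Emean ler_wpM2l ?invr_ge0 ?ler0n //.
by apply: ler_sum => i _; apply: h.
Qed.

Lemma EmeanZ {R : realType} N (c : R) (f : 'I_N -> R) :
  Emean (fun i => c * f i) = c * Emean f.
Proof. by rewrite /Emean -mulr_sumr mulrCA. Qed.

Lemma EmeanN {R : realType} N (f : 'I_N -> R) :
  Emean (fun i => - f i) = - Emean f.
Proof. by rewrite /Emean sumrN mulrN. Qed.

Theorem lemmaS9 (R : realType) (N p : nat)
  (Fv : 'I_N -> 'I_p.+1 -> R) (Rv : 'I_N -> bool)
  (ghat gbar : 'I_p.+1 -> R) (C0 lambda0 zeta0 A0 M0 : R) :
  0 < lambda0 -> 0 < zeta0 ->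
  (forall (i : 'I_N) (j : 'I_p.+1), `|Fv i j| <= C0) ->
  #|supp0 gbar|%:R * lambda0 <= zeta0 ->
  1 < A0 -> 0 < M0 ->
  DCAL Fv Rv ghat gbar + (A0 - 1) * lambda0 * l1norm (fun j => ghat j - gbar j)
    <= M0 * #|supp0 gbar|%:R * lambda0 ^+ 2 ->
  Emean (fun i => Rind Rv i * wfun Fv gbar i
                  * (linF Fv ghat i - linF Fv gbar i) ^+ 2)
    <= expR ((A0 - 1)^-1 * M0 * C0 * zeta0) * M0 * #|supp0 gbar|%:R * lambda0 ^+ 2.
Proof.
move=> hl hz hF hS hA hM hD.
set S := #|supp0 gbar|%:R in hS hD *.
set l1 := l1norm _ in hD.
set eta := (A0 - 1)^-1 * M0 * C0 * zeta0.
have hS0 : 0 <= S by rewrite /S ler0n.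
have hl10 : 0 <= l1 by apply: sumr_ge0 => j _; apply: normr_ge0.
have hRi : forall i : 'I_N, 0 <= @Rind R N Rv i /\ @Rind R N Rv i <= 1.
  by move=> i; rewrite /Rind; case: (Rv i) => /=; split; lra.
have hT2 : forall i : 'I_N, 0 <= - (Rind Rv i * (wfun Fv ghat i - wfun Fv gbar i)
                    * (linF Fv ghat i - linF Fv gbar i)).
  move=> i; set d := linF Fv ghat i - linF Fv gbar i.
  have -> : wfun Fv ghat i = wfun Fv gbar i * expR (- d).
    by rewrite /wfun -expRD; congr expR; rewrite /d; lra.
  have := key_ineq d. have := expR_gt0 (- `|d|). have := hRi i.
  have : 0 < wfun Fv gbar i by apply: expR_gt0.
  move=> hw [h0 h1] he hk.
  have h2 : 0 <= expR (- `|d|) * d ^+ 2 by rewrite mulr_ge0 // ?sqr_ge0 // ltW.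
  have -> : - (Rind Rv i * (wfun Fv gbar i * expR (- d) - wfun Fv gbar i) * d)
     = Rind Rv i * wfun Fv gbar i * ((1 - expR (- d)) * d) by ring.
  apply: mulr_ge0; [apply: mulr_ge0 => //; exact: ltW | exact: le_trans h2 hk].
have hDge : 0 <= DCAL Fv Rv ghat gbar.
  rewrite /DCAL -EmeanN /Emean mulr_ge0 ?invr_ge0 ?ler0n //.
  by apply: sumr_ge0 => i _; apply: hT2.
have hl1b : (A0 - 1) * l1 <= M0 * S * lambda0.
  have : lambda0 * ((A0 - 1) * l1) <= lambda0 * (M0 * S * lambda0) by nra.
  by rewrite ler_pM2l.
have hd : forall i : 'I_N, `|linF Fv ghat i - linF Fv gbar i| <= eta.
  move=> i.
  have hC0 : 0 <= C0 by apply: le_trans (hF i ord0); apply: normr_ge0.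
  have e1 : linF Fv ghat i - linF Fv gbar i
          = \sum_(j < p.+1) (ghat j - gbar j) * Fv i j.
    by rewrite /linF -sumrB; apply: eq_bigr => j _; rewrite mulrBl.
  have e2 : `|linF Fv ghat i - linF Fv gbar i| <= C0 * l1.
    rewrite e1 /l1 /l1norm mulr_sumr; apply: le_trans (ler_norm_sum _ _ _) _.
    apply: ler_sum => j _; rewrite normrM mulrC.
    by apply: ler_wpM2r; [apply: normr_ge0 | apply: hF].
  apply: le_trans e2 _.
  have hA1 : 0 < A0 - 1 by lra.
  rewrite /eta -mulrA -mulrA ler_pdivlMl // mulrA.
  have : C0 * ((A0 - 1) * l1) <= C0 * (M0 * S * lambda0) by apply: ler_wpM2l.
  have : M0 * C0 * (S * lambda0) <= M0 * C0 * zeta0.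
    by apply: ler_wpM2l => //; apply: mulr_ge0 => //; apply: ltW.
  nra.
have hT1 : forall i : 'I_N, Rind Rv i * wfun Fv gbar i
                  * (linF Fv ghat i - linF Fv gbar i) ^+ 2
   <= expR eta * - (Rind Rv i * (wfun Fv ghat i - wfun Fv gbar i)
                    * (linF Fv ghat i - linF Fv gbar i)).
  move=> i; have hdi := hd i; set d := linF Fv ghat i - linF Fv gbar i in hdi *.
  have -> : wfun Fv ghat i = wfun Fv gbar i * expR (- d).
    by rewrite /wfun -expRD; congr expR; rewrite /d; lra.
  have := key_ineq d. have := hRi i.
  have : 0 < wfun Fv gbar i by apply: expR_gt0.
  have he : 1 <= expR eta * expR (- `|d|).
    by rewrite -expRD -(expR0 R) ler_expR; lra.
  have := expR_gt0 eta. have := sqr_ge0 d.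
  move=> hs hee hw [h0 h1] hk.
  rewrite (_ : expR eta * - (Rind Rv i * (wfun Fv gbar i * expR (- d)
           - wfun Fv gbar i) * d) = Rind Rv i * wfun Fv gbar i
           * (expR eta * ((1 - expR (- d)) * d))); last by ring.
  set E := expR eta in he hee *; set e' := expR (- `|d|) in he hk *.
  set w := wfun Fv gbar i in hw *.
  set r := Rind Rv i in h0 h1 *.
  have hrw : 0 <= r * w by rewrite mulr_ge0 // ltW.
  apply: ler_wpM2l => //.
  apply: le_trans (_ : _ <= E * (e' * d ^+ 2)) _.
    by rewrite mulrA -[X in X <= _]mul1r ler_wpM2r.
  by apply: ler_wpM2l => //; apply: ltW.
apply: le_trans (@Emean_le R N _ _ hT1) _.
rewrite EmeanZ EmeanN -/(DCAL Fv Rv ghat gbar).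
rewrite -!mulrA; apply: ler_wpM2l; first exact: ltW (expR_gt0 _).
have : 0 <= (A0 - 1) * lambda0 * l1 by rewrite mulr_ge0 // mulr_ge0 // ?ltW //; lra.
rewrite !mulrA; lra.
Qed.
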